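(* Consider a platoon of a leader moving at constant speed and $N$ heterogeneous followers with all states measured ($c_p=c_v=c_a=1$). For follower $i\in\{1,\dots,N\}$ with inertial time lag $\tau_i>0$ let $$A_i=\begin{bmatrix}0&1&0\\0&0&1\\0&0&-1/\tau_i\end{bmatrix},\qquad B_i=\begin{bmatrix}0\\0\\1/\tau_i\end{bmatrix}.$$ Suppose the information flow topology among the followers is a directed acyclic graph with $d_{ii}+p_{ii}>0$ for every $i$. For each $i$, let $\varepsilon_i>0$, let $P_i\succeq 0$ be a root of the algebraic Riccati equation $$P_iA_i+A_i^TP_i-P_iB_iB_i^TP_i+\varepsilon_iI_3=0,$$ and set the feedback gain $k_i=[k_{ip},k_{iv},k_{ia}]^T$ by $k_i^T=\alpha_iB_i^TP_i$. If $\alpha_i\ge\frac{1}{2(d_{ii}+p_{ii})}$ for all $i\in\{1,\dots,N\}$, then the closed-loop system $$\begin{bmatrix}\dot{\hat p}\\ \dot{\hat v}\\ \dot{\hat a}\end{bmatrix}=\begin{bmatrix}0&I_N&0\\0&0&I_N\\-T_pG&-T_vG&-\Delta-T_aG\end{bmatrix}\begin{bmatrix}\hat p\\ \hat v\\ \hat a\end{bmatrix}$$ is asymptotically stable, where $\Delta=\mathrm{diag}\{1/\tau_1,\dots,1/\tau_N\}$, $T_\sharp=\mathrm{diag}\{k_{1\sharp}/\tau_1,\dots,k_{N\sharp}/\tau_N\}$ for $\sharp\in\{p,v,a\}$, and $G=\mathcal{L}+\mathcal{P}$.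
   Context: The information flow among followers is a directed graph on $\{1,\dots,N\}$ with adjacency matrix $\mathcal{A}=[a_{ij}]$, $a_{ij}=1$ if follower $i$ receives information from follower $j$, else $0$, and $a_{ii}=0$. The degree matrix is $\mathcal{D}=\mathrm{diag}\{d_{11},\dots,d_{NN}\}$ with $d_{ii}=\sum_{k=1}^N a_{ik}$, and the Laplacian is $\mathcal{L}=\mathcal{D}-\mathcal{A}$. The pinning matrix is $\mathcal{P}=\mathrm{diag}\{p_{11},\dots,p_{NN}\}$ with $p_{ii}=1$ if follower $i$ receives information from the leader, else $0$. A directed acyclic graph is a finite directed graph with no directed cycles. The vectors $\hat p,\hat v,\hat a\in\mathbb{R}^N$ collect the followers' position, velocity and acceleration tracking errors $\hat p_i=p_i-p_0+id_0$, $\hat v_i=v_i-v_0$, $\hat a_i=a_i$ under the controller $u_i=-k_i^T(\sum_j a_{ij}(\hat x_i-\hat x_j)+p_{ii}\hat x_i)$, $\hat x_i=[\hat p_i,\hat v_i,\hat a_i]^T$, for vehicle dynamics $\dot p_i=v_i$, $\dot v_i=a_i$, $\tau_i\dot a_i+a_i=u_i$. *)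

(* Defs.v *)
From HB Require Import structures.
From mathcomp Require Import all_boot all_order all_algebra.
From mathcomp Require Import all_classical all_reals all_analysis.
Set Implicit Arguments. Unset Strict Implicit. Unset Printing Implicit Defensive.
Import Order.TTheory GRing.Theory Num.Theory.
Import numFieldNormedType.Exports.
Local Open Scope ring_scope.
Local Open Scope classical_set_scope.

Section Platoon.
Variable R : realType.

Definition Ai (tau : R) : 'M[R]_3 :=
  \matrix_(r < 3, c < 3)
    (if (r == 0%N :> nat) && (c == 1%N :> nat) then 1
     else if (r == 1%N :> nat) && (c == 2%N :> nat) then 1
     else if (r == 2%N :> nat) && (c == 2%N :> nat) then - tau^-1
     else 0).

Definition Bi (tau : R) : 'cV[R]_3 :=
  \col_(r < 3) (if r == 2%N :> nat then tau^-1 else 0).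

Definition psd (n : nat) (P : 'M[R]_n) : Prop :=
  P^T = P /\ forall x : 'cV[R]_n, 0 <= (x^T *m P *m x) 0 0.

Definition ARE_root (A : 'M[R]_3) (B : 'cV[R]_3) (eps : R) (P : 'M[R]_3) : Prop :=
  P *m A + A^T *m P - P *m B *m B^T *m P + eps%:M = 0.

(* graph: a i j = true iff follower i receives information from follower j *)
Definition directed_acyclic (N : nat) (a : 'I_N -> 'I_N -> bool) : Prop :=
  ~ exists (i : 'I_N) (s : seq 'I_N),
      s != [::] /\ path (fun x y => a x y) i s /\ last i s = i.

Definition deg (N : nat) (a : 'I_N -> 'I_N -> bool) (i : 'I_N) : R :=
  \sum_(k < N) (a i k)%:R.

Definition Gmat (N : nat) (a : 'I_N -> 'I_N -> bool) (p : 'I_N -> bool) : 'M[R]_N :=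
  \matrix_(i, j) ((i == j)%:R * (deg a i + (p i)%:R) - (a i j)%:R).

Definition gain (tau alpha : R) (P : 'M[R]_3) : 'rV[R]_3 :=
  alpha *: ((Bi tau)^T *m P).

(* T_# = diag{k_{i#}/tau_i}, # = 0 (p), 1 (v), 2 (a) *)
Definition Tmat (N : nat) (tau alpha : 'I_N -> R) (P : 'I_N -> 'M[R]_3) (c : 'I_3)
  : 'M[R]_N :=
  diag_mx (\row_i (gain (tau i) (alpha i) (P i) ord0 c / tau i)).

Definition Delta (N : nat) (tau : 'I_N -> R) : 'M[R]_N := diag_mx (\row_i (tau i)^-1).

Definition closed_loop (N : nat) (tau alpha : 'I_N -> R) (P : 'I_N -> 'M[R]_3)
    (G : 'M[R]_N) : 'M[R]_(N + (N + N)) :=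
  let Tp := Tmat tau alpha P (@Ordinal 3 0 isT) in
  let Tv := Tmat tau alpha P (@Ordinal 3 1 isT) in
  let Ta := Tmat tau alpha P (@Ordinal 3 2 isT) in
  block_mx (0 : 'M[R]_(N, N)) (row_mx 1%:M 0)
           (col_mx 0 (- (Tp *m G)))
           (block_mx 0 1%:M (- (Tv *m G)) (- Delta tau - Ta *m G)).

Definition is_solution (n : nat) (M : 'M[R]_n) (x : R -> 'cV[R]_n) : Prop :=
  forall (t : R) (i : 'I_n),
    is_derive t 1 (fun s => x s i 0) (\sum_(j < n) M i j * x t j 0).

Definition asymptotically_stable (n : nat) (M : 'M[R]_n) : Prop :=
  (forall e : R, 0 < e -> exists2 d : R, 0 < d &
     forall x, is_solution M x -> (forall i, `|x 0 i 0| < d) ->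
       forall t, 0 <= t -> forall i, `|x t i 0| < e)
  /\ (forall x, is_solution M x ->
       forall i, (fun t => x t i 0) @ +oo --> (0 : R)).

End Platoon.

(* Main.v *)
Require Import Defs.
Set Warnings "-notation-overridden,-ambiguous-paths,-notation-incompatible-prefix,-deprecated".
Require Import Defs.
From HB Require Import structures.
From mathcomp Require Import all_boot all_order all_algebra.
From mathcomp Require Import all_classical all_reals all_analysis.
From mathcomp Require Import ring lra zify.
From Stdlib Require Import Lia.
Import Order.TTheory GRing.Theory Num.Theory.
Import numFieldNormedType.Exports.
Set Implicit Arguments. Unset Strict Implicit. Unset Printing Implicit Defensive.
Local Open Scope ring_scope.
Lemma nincr_of_deriv (R : realType) (f df : R -> R) a b :
  (forall t : R, is_derive t 1 f (df t)) -> (forall t, a <= t <= b -> df t <= 0) ->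
  a <= b -> f b <= f a.
Proof.
move=> hd hn ab.
have [c cab e] := MVT_segment ab (fun x _ => hd x)
  (derivable_within_continuous (fun x _ => @ex_derive _ _ _ _ _ _ _ (hd x))).
rewrite -subr_le0 e; apply: mulr_le0_ge0; last by rewrite subr_ge0.
by apply: hn; move: cab; rewrite in_itv.
Qed.

Lemma deriv_lin (R : realType) (k t : R) : is_derive t 1 (fun s : R => k * s) k.
Proof.
have := @is_deriveZ R R R id k t 1 1 (is_derive_id _ _).
by rewrite /GRing.scale /= mulr1.
Qed.

Definition sqn (R : realType) (n : nat) (v : 'cV[R]_n) : R := \sum_(k < n) v k 0 ^+ 2.

Lemma sqn_ge0 (R : realType) n (v : 'cV[R]_n) : 0 <= sqn v.
Proof. by apply: sumr_ge0 => k _; exact: sqr_ge0. Qed.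

Lemma sqn_comp (R : realType) n (v : 'cV[R]_n) i : v i 0 ^+ 2 <= sqn v.
Proof.
rewrite /sqn (bigD1 i) //= lerDl; apply: sumr_ge0 => k _; exact: sqr_ge0.
Qed.

Lemma sqn_bound (R : realType) n (v : 'cV[R]_n) d :
  (forall i, `|v i 0| < d) -> sqn v <= n%:R * d ^+ 2.
Proof.
move=> h; rewrite /sqn.
have -> : n%:R * d ^+ 2 = \sum_(k < n) d ^+ 2 by rewrite sumr_const card_ord mulr_natl.
apply: ler_sum => k _; rewrite -real_normK ?num_real //.
have := normr_ge0 (v k 0); have := h k; move: (`|v k 0|) => a; nra.
Qed.

Lemma abs_lt_of_sq (R : realType) (y e : R) : 0 < e -> y ^+ 2 < e ^+ 2 -> `|y| < e.
Proof.
move=> e0 h; rewrite ltNge; apply/negP => le.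
have : e ^+ 2 <= `|y| ^+ 2 by move: (`|y|) le => a; nra.
by rewrite real_normK ?num_real // leNgt h.
Qed.

Lemma GL (R : realType) n (M : 'M[R]_n) (Wf : 'cV[R]_n -> R) (d0 L0 m0 : R) :
  0 < d0 -> 0 < L0 -> 0 < m0 ->
  (forall v, d0 * sqn v <= Wf v) -> (forall v, Wf v <= L0 * sqn v) ->
  (forall x, is_solution M x -> exists dW : R -> R,
     (forall t : R, is_derive t 1 (fun s => Wf (x s)) (dW t)) /\
     (forall t : R, dW t <= - (m0 * sqn (x t)))) ->
  asymptotically_stable M.
Proof.
move=> d00 L00 m00 Wlo Whi Hder.
have Wdecr x : is_solution M x -> forall a b, a <= b -> Wf (x b) <= Wf (x a).
  move=> xs a b ab; have [dW [hd hle]] := Hder x xs.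
  apply: (nincr_of_deriv (df := dW)) => // t _.
  apply: (le_trans (hle t)); rewrite lerNl oppr0; apply: mulr_ge0; first exact: ltW.
  exact: sqn_ge0.
have comp_bound (x : R -> 'cV[R]_n) (t : R) i : d0 * x t i 0 ^+ 2 <= Wf (x t).
  apply: le_trans (Wlo _); apply: ler_wpM2l; [exact: ltW | exact: sqn_comp].
split.
  move=> e e0.
  set c := d0 / (L0 * n%:R + L0 + d0).
  have den0 : 0 < L0 * n%:R + L0 + d0.
    have : 0 <= L0 * n%:R by apply: mulr_ge0; [exact: ltW|]. lra.
  have c0 : 0 < c by apply: divr_gt0.
  have ceq : c * (L0 * n%:R + L0 + d0) = d0 by rewrite /c divfK // gt_eqF.
  exists (e * c); first exact: mulr_gt0.
  move=> x xs h0 t t0 i.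
  apply: abs_lt_of_sq => //.
  have h1 := comp_bound x t i.
  have h2 := Wdecr x xs 0 t t0.
  have h3 := Whi (x 0).
  have h4 := sqn_bound h0.
  have n0 : 0 <= (n%:R : R) by [].
  have y0 := sqr_ge0 (x t i 0).
  have s0 := sqn_ge0 (x 0).
  move: (x t i 0 ^+ 2) (sqn (x 0)) (Wf (x t)) (Wf (x 0)) (n%:R : R) h1 h2 h3 h4 n0 y0 s0 ceq
    => y s wt w0 nn h1 h2 h3 h4 n0 y0 s0 ceq.
  have h5 := ler_wpM2l (ltW L00) h4.
  have hw : d0 * y <= L0 * (nn * (e * c) ^+ 2) by lra.
  have Ln : 0 <= L0 * nn by apply: mulr_ge0 => //; exact: ltW.
  have hc1 : c <= 1.
    rewrite leNgt; apply/negP => c1.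
    have : d0 < c * d0 by rewrite -{1}[d0]mul1r ltr_pM2r.
    have : 0 <= c * (L0 * nn + L0) by apply: mulr_ge0; [exact: ltW | lra].
    move: ceq; rewrite !mulrDr; lra.
  have hc2 : L0 * nn * c < d0.
    have : 0 < c * L0 by exact: mulr_gt0.
    have : 0 < c * d0 by exact: mulr_gt0.
    move: ceq; rewrite !mulrDr; lra.
  have hc3 : L0 * nn * c * c <= L0 * nn * c.
    by rewrite -{2}[L0 * nn * c]mulr1; apply: ler_wpM2l => //; apply: mulr_ge0 => //; exact: ltW.
  have he : L0 * (nn * (e * c) ^+ 2) = (L0 * nn * c * c) * e ^+ 2 by ring.
  have e2 : 0 < e ^+ 2 by exact: exprn_gt0.
  have : L0 * nn * c * c * e ^+ 2 < d0 * e ^+ 2.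
    rewrite ltr_pM2r //; lra.
  move=> HH; have : d0 * y < d0 * e ^+ 2 by lra.
  by rewrite ltr_pM2l.
move=> x xs i; apply/cvgr0Pnorm_lt => eps eps0.
set eta := d0 * eps ^+ 2.
have eta0 : 0 < eta by apply: mulr_gt0 => //; exact: exprn_gt0.
have [T [T0 HT]] : exists T, 0 <= T /\ Wf (x T) < eta.
  apply: contrapT => H.
  have Hge t : 0 <= t -> eta <= Wf (x t).
    move=> t0; rewrite leNgt; apply/negP => lt; apply: H; by exists t.
  have [dW [hd hle]] := Hder x xs.
  set k := m0 / L0 * eta.
  have k0 : 0 < k by apply: mulr_gt0 => //; exact: divr_gt0.
  set t1 := Wf (x 0) / k + 1.
  have t10 : 0 <= t1.
    apply: addr_ge0 => //; apply: divr_ge0; last exact: ltW.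
    apply: le_trans (Wlo _); apply: mulr_ge0; [exact: ltW | exact: sqn_ge0].
  have g_le : Wf (x t1) + k * t1 <= Wf (x 0) + k * 0.
    apply: (nincr_of_deriv (f := fun s => Wf (x s) + k * s) (df := fun s => dW s + k)) => //.
      by move=> t; apply: is_deriveD => //; exact: deriv_lin.
    move=> t /andP [ta tb].
    have h1 := hle t; have h2 := Hge t ta; have h3 := Whi (x t).
    have hk : k * L0 = m0 * eta by rewrite /k mulrAC divfK // gt_eqF.
    move: (sqn (x t)) (Wf (x t)) h1 h2 h3 hk => s w h1 h2 h3 hk.
    have h5 : m0 * eta <= m0 * (L0 * s) by rewrite ler_pM2l //; lra.
    have h4 : k * L0 <= m0 * (L0 * s) by rewrite hk.
    have : k <= m0 * s.
      rewrite -(ler_pM2r L00); apply: (le_trans h4); rewrite le_eqVlt; apply/orP; left; apply/eqP; ring.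
    lra.
  have := Hge t1 t10.
  have ekt : k * t1 = Wf (x 0) + k by rewrite /t1 mulrDr mulr1 mulrC divfK // gt_eqF.
  lra.
exists T; split; first by rewrite num_real.
move=> t Tt.
apply: abs_lt_of_sq => //.
have h1 := comp_bound x t i.
have h2 := Wdecr x xs T t (ltW Tt).
have : d0 * x t i 0 ^+ 2 < d0 * eps ^+ 2 by rewrite -/eta; lra.
by rewrite ltr_pM2l.
Qed.
Definition o0 : 'I_3 := @Ordinal 3 0 isT.
Definition o1 : 'I_3 := @Ordinal 3 1 isT.
Definition o2 : 'I_3 := @Ordinal 3 2 isT.

Lemma sum3 (R : realType) (f : 'I_3 -> R) : \sum_(i < 3) f i = f o0 + f o1 + f o2.
Proof. rewrite !big_ord_recr big_ord0 /= add0r; congr (_ + _ + _); congr f; exact: val_inj. Qed.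

Lemma wo0 : widen_ord (leqnSn 2) (widen_ord (leqnSn 1) ord_max) = o0.
Proof. exact: val_inj. Qed.
Lemma wo1 : widen_ord (leqnSn 2) ord_max = o1.
Proof. exact: val_inj. Qed.
Lemma wo2 : ord_max = o2.
Proof. exact: val_inj. Qed.

Ltac expand3 := repeat progress rewrite ?mxE ?big_ord_recr ?big_ord0 /= ?wo0 ?wo1 ?wo2.

Lemma ARE_entries (R : realType) (tau eps : R) (P : 'M[R]_3) :
  P^T = P -> ARE_root (Ai tau) (Bi tau) eps P ->
  let r := tau^-1 in
  let p i j := P i j in
  (eps - r^+2 * p o0 o2 ^+ 2 = 0) /\
      (p o0 o0 - r^+2 * p o0 o2 * p o1 o2 = 0) /\
      (p o0 o1 - r * p o0 o2 - r^+2 * p o0 o2 * p o2 o2 = 0) /\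
      (2 * p o0 o1 - r^+2 * p o1 o2 ^+ 2 + eps = 0) /\
      (p o1 o1 - r * p o1 o2 + p o0 o2 - r^+2 * p o1 o2 * p o2 o2 = 0) /\
      (2 * p o1 o2 - 2 * r * p o2 o2 - r^+2 * p o2 o2 ^+ 2 + eps = 0).
Proof.
move=> sym are r p.
have sy i j : P j i = P i j by rewrite -{1}sym mxE.
have E i j := congr1 (fun M : 'M[R]_3 => M i j) are.
have E00 := E o0 o0. have E01 := E o0 o1. have E02 := E o0 o2.
have E11 := E o1 o1. have E12 := E o1 o2. have E22 := E o2 o2.
move: E00 E01 E02 E11 E12 E22.
rewrite /Ai /Bi; expand3.
rewrite /p /r.
move=> e00 e01 e02 e11 e12 e22.
rewrite !(sy o0 o1) !(sy o0 o2) !(sy o1 o2) in e00 e01 e02 e11 e12 e22.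
by do !split; lra.
Qed.

Definition nodeDer (R : realType) (tau alpha g : R) (P : 'M[R]_3) (x s : 'I_3 -> R)
  (c : 'I_3) : R :=
  if c == o0 then x o1 else if c == o1 then x o2
  else - (tau^-1 * x o2) - \sum_(c' < 3) (gain tau alpha P ord0 c' / tau) * (g * x c' - s c').

Lemma gain_entry (R : realType) (tau alpha : R) (P : 'M[R]_3) c :
  gain tau alpha P ord0 c = alpha * (tau^-1 * P o2 c).
Proof. rewrite /gain /Bi; expand3; ring. Qed.

Lemma young (R : realType) (eta a b : R) : 0 < eta -> 2 * a * b <= eta * a ^+ 2 + eta^-1 * b ^+ 2.
Proof.
move=> e0.
have h : 0 <= (eta * a - b) ^+ 2 by exact: sqr_ge0.
have ei : eta * eta^-1 = 1 by rewrite divff // gt_eqF.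
have : 0 <= eta^-1 * (eta * a - b) ^+ 2 by apply: mulr_ge0 => //; rewrite invr_ge0 ltW.
have -> : eta^-1 * (eta * a - b) ^+ 2 = eta * a ^+ 2 * (eta * eta^-1) - 2 * a * b * (eta * eta^-1) + eta^-1 * b ^+ 2 by ring.
rewrite ei; lra.
Qed.

Lemma cs3 (R : realType) (a0 a1 a2 x0 x1 x2 : R) :
  (a0 * x0 + a1 * x1 + a2 * x2) ^+ 2 <= (a0 ^+ 2 + a1 ^+ 2 + a2 ^+ 2) * (x0 ^+ 2 + x1 ^+ 2 + x2 ^+ 2).
Proof.
have h1 := sqr_ge0 (a0 * x1 - a1 * x0).
have h2 := sqr_ge0 (a0 * x2 - a2 * x0).
have h3 := sqr_ge0 (a1 * x2 - a2 * x1).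
have -> : (a0 ^+ 2 + a1 ^+ 2 + a2 ^+ 2) * (x0 ^+ 2 + x1 ^+ 2 + x2 ^+ 2) =
  (a0 * x0 + a1 * x1 + a2 * x2) ^+ 2 + ((a0 * x1 - a1 * x0) ^+ 2 + (a0 * x2 - a2 * x0) ^+ 2 + (a1 * x2 - a2 * x1) ^+ 2) by ring.
lra.
Qed.

Lemma node_ineq (R : realType) (eps r al g c y z X S w x0 x1 x2 : R) :
  0 < eps -> 0 < r -> 0 <= al -> 0 <= g -> 1 <= 2 * al * g -> 0 < c ->
  X = x0 ^+ 2 + x1 ^+ 2 + x2 ^+ 2 -> 0 <= S -> y ^+ 2 <= c * X -> z ^+ 2 <= c * S ->
  w = r * x2 -> forall dl D u,
  dl = eps / (4 * (2 + (al * g + al) * r ^+ 2 + al * g * c)) ->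
  D = 4 * c ^+ 2 * al ^+ 2 / eps + dl * al * c ->
  u = - (al * (g * y - z)) ->
  - eps * X + y ^+ 2 + 2 * u * y + dl * (2 * (x0 * x1 + x1 * x2) - 2 * r * x2 ^+ 2 + 2 * w * u)
  <= - (eps / 2) * X + D * S.
Proof.
move=> e0 r0 a0 g0 ag c0 hX S0 hy hz hw dl D u hdl hD hu.
have X0 : 0 <= X by rewrite hX; have := sqr_ge0 x0; have := sqr_ge0 x1; have := sqr_ge0 x2; lra.
have den0 : 0 < 4 * (2 + (al * g + al) * r ^+ 2 + al * g * c).
  have : 0 <= (al * g + al) * r ^+ 2 by apply: mulr_ge0; [apply: addr_ge0 => //; exact: mulr_ge0 | exact: sqr_ge0].
  have : 0 <= al * g * c by apply: mulr_ge0; [exact: mulr_ge0 | exact: ltW].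
  lra.
have dl0 : 0 < dl by rewrite hdl; apply: divr_gt0.
have dleq : dl * (2 + (al * g + al) * r ^+ 2 + al * g * c) = eps / 4.
  rewrite hdl; field; lra.
have B1 : (1 - 2 * al * g) * y ^+ 2 <= 0.
  by apply: mulr_le0_ge0; [lra | exact: sqr_ge0].
have eta0 : 0 < eps / (4 * c) by apply: divr_gt0 => //; lra.
have B2 := young y (al * z) eta0.
have B2a : eps / (4 * c) * y ^+ 2 <= eps / 4 * X.
  have : eps / (4 * c) * y ^+ 2 <= eps / (4 * c) * (c * X) by rewrite ler_pM2l.
  have -> : eps / (4 * c) * (c * X) = eps / 4 * X by field; lra.
  done.
have B2b : (eps / (4 * c))^-1 * (al * z) ^+ 2 <= 4 * c ^+ 2 * al ^+ 2 / eps * S.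
  have -> : (eps / (4 * c))^-1 * (al * z) ^+ 2 = 4 * c * al ^+ 2 / eps * z ^+ 2.
    by field; apply/andP; split; lra.
  have : 0 <= 4 * c * al ^+ 2 / eps by apply: divr_ge0; [apply: mulr_ge0; [lra | exact: sqr_ge0] | lra].
  move=> h; apply: (le_trans (ler_wpM2l h hz)).
  rewrite le_eqVlt; apply/orP; left; apply/eqP; field; lra.
have B3 : 2 * (x0 * x1 + x1 * x2) <= 2 * X.
  have := sqr_ge0 (x0 - x1); have := sqr_ge0 (x1 - x2); have := sqr_ge0 x0; have := sqr_ge0 x2.
  rewrite hX; nra.
have B4 : 0 <= 2 * r * x2 ^+ 2 by apply: mulr_ge0; [lra | exact: sqr_ge0].
have w2 : w ^+ 2 <= r ^+ 2 * X.
  rewrite hw exprMn; apply: ler_wpM2l; first exact: sqr_ge0.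
  rewrite hX; have := sqr_ge0 x0; have := sqr_ge0 x1; lra.
have B5 : 2 * w * u <= (al * g + al) * r ^+ 2 * X + al * g * c * X + al * c * S.
  have h1 := sqr_ge0 (w + y); have h2 := sqr_ge0 (w - z).
  have ag0 : 0 <= al * g by exact: mulr_ge0.
  have e1 : 2 * w * u = - (al * g) * (2 * w * y) + al * (2 * w * z) by rewrite hu; ring.
  have k1 : - (al * g) * (2 * w * y) <= al * g * (w ^+ 2 + y ^+ 2).
    have : 0 <= al * g * (w + y) ^+ 2 by exact: mulr_ge0.
    have -> : al * g * (w + y) ^+ 2 = al * g * (w ^+ 2 + y ^+ 2) + al * g * (2 * w * y) by ring.
    lra.
  have k2 : al * (2 * w * z) <= al * (w ^+ 2 + z ^+ 2).
    have : 0 <= al * (w - z) ^+ 2 by exact: mulr_ge0.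
    have -> : al * (w - z) ^+ 2 = al * (w ^+ 2 + z ^+ 2) - al * (2 * w * z) by ring.
    lra.
  have k3 : al * g * (w ^+ 2 + y ^+ 2) <= al * g * (r ^+ 2 * X + c * X) by apply: ler_wpM2l => //; lra.
  have k4 : al * (w ^+ 2 + z ^+ 2) <= al * (r ^+ 2 * X + c * S) by apply: ler_wpM2l => //; lra.
  lra.
have Bd : dl * (2 * (x0 * x1 + x1 * x2) - 2 * r * x2 ^+ 2 + 2 * w * u) <=
    dl * (2 * X + ((al * g + al) * r ^+ 2 * X + al * g * c * X + al * c * S)).
  apply: ler_wpM2l; [exact: ltW | lra].
have Bd2 : dl * (2 * X + ((al * g + al) * r ^+ 2 * X + al * g * c * X + al * c * S)) =
   (dl * (2 + (al * g + al) * r ^+ 2 + al * g * c)) * X + dl * al * c * S by ring.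
rewrite dleq in Bd2.
have yu : y ^+ 2 + 2 * u * y = (1 - 2 * al * g) * y ^+ 2 + 2 * y * (al * z) by rewrite hu; ring.
rewrite hD; lra.
Qed.

Lemma node (R : realType) (tau eps alpha g : R) (P : 'M[R]_3) :
  0 < tau -> 0 < eps -> 0 < g -> (2 * g)^-1 <= alpha -> psd P ->
  ARE_root (Ai tau) (Bi tau) eps P ->
  exists dl D L : R, [/\ 0 < dl, 0 <= D, 0 < L &
   forall x s : 'I_3 -> R,
   [/\ \sum_(i < 3) \sum_(j < 3) (P i j + dl * (i == j)%:R) *
          (nodeDer tau alpha g P x s i * x j + x i * nodeDer tau alpha g P x s j)
         <= - (eps / 2) * \sum_(c < 3) x c ^+ 2 + D * \sum_(c < 3) s c ^+ 2,
       dl * \sum_(c < 3) x c ^+ 2 <= \sum_(i < 3) \sum_(j < 3) (P i j + dl * (i == j)%:R) * (x i * x j) &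
       \sum_(i < 3) \sum_(j < 3) (P i j + dl * (i == j)%:R) * (x i * x j) <= L * \sum_(c < 3) x c ^+ 2]].
Proof.
move=> tau0 eps0 g0 halpha [sym psdP] are.
have ginv0 : 0 < (2 * g)^-1 by rewrite invr_gt0; lra.
have al0 : 0 <= alpha by apply: ltW; exact: lt_le_trans halpha.
have ag : 1 <= 2 * alpha * g.
  have : (2 * g) * (2 * g)^-1 <= (2 * g) * alpha by rewrite ler_pM2l //; lra.
  by rewrite divff ?gt_eqF //; try lra; rewrite mulrAC.
have sy i j : P j i = P i j by rewrite -{1}sym mxE.
have [a1 [a2 [a3 [a4 [a5 a6]]]]] := ARE_entries sym are.
set r := tau^-1.
have r0 : 0 < r by rewrite /r invr_gt0.
set c := r ^+ 2 * (P o0 o2 ^+ 2 + P o1 o2 ^+ 2 + P o2 o2 ^+ 2) + 1.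
have c0 : 0 < c.
  have : 0 <= r ^+ 2 * (P o0 o2 ^+ 2 + P o1 o2 ^+ 2 + P o2 o2 ^+ 2).
    apply: mulr_ge0; first exact: sqr_ge0.
    have := sqr_ge0 (P o0 o2); have := sqr_ge0 (P o1 o2); have := sqr_ge0 (P o2 o2); lra.
  rewrite /c; lra.
set dl := eps / (4 * (2 + (alpha * g + alpha) * r ^+ 2 + alpha * g * c)).
set D := 4 * c ^+ 2 * alpha ^+ 2 / eps + dl * alpha * c.
have den0 : 0 < 4 * (2 + (alpha * g + alpha) * r ^+ 2 + alpha * g * c).
  have : 0 <= (alpha * g + alpha) * r ^+ 2.
    by apply: mulr_ge0; [apply: addr_ge0 => //; apply: mulr_ge0 => //; exact: ltW | exact: sqr_ge0].
  have : 0 <= alpha * g * c by apply: mulr_ge0; [apply: mulr_ge0 => //; exact: ltW | exact: ltW].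
  lra.
have dl0 : 0 < dl by apply: divr_gt0.
have D0 : 0 <= D.
  apply: addr_ge0; first by apply: divr_ge0; [apply: mulr_ge0; [apply: mulr_ge0; [lra|exact: sqr_ge0]|exact: sqr_ge0] | exact: ltW].
  by apply: mulr_ge0; [apply: mulr_ge0 => //; exact: ltW | exact: ltW].
set Sp := \sum_(i < 3) \sum_(j < 3) P i j ^+ 2.
have Sp0 : 0 <= Sp by apply: sumr_ge0 => i _; apply: sumr_ge0 => j _; exact: sqr_ge0.
have Spij i j : P i j ^+ 2 <= Sp.
  rewrite /Sp (bigD1 i) //= (bigD1 j) //=.
  have : 0 <= \sum_(j0 < 3 | j0 != j) P i j0 ^+ 2 by apply: sumr_ge0 => k _; exact: sqr_ge0.
  have : 0 <= \sum_(i0 < 3 | i0 != i) \sum_(j < 3) P i0 j ^+ 2.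
    by apply: sumr_ge0 => k _; apply: sumr_ge0 => l _; exact: sqr_ge0.
  lra.
exists dl, D, (2 * (Sp + 1) + dl); split => //.
  by have := ltW dl0; lra.
have ent (a b : R) i j : 2 * (P i j * (a * b)) <= Sp * a ^+ 2 + b ^+ 2.
  have h1 := sqr_ge0 (P i j * a - b).
  have h2 : P i j ^+ 2 * a ^+ 2 <= Sp * a ^+ 2 by apply: ler_wpM2r; [exact: sqr_ge0 | exact: Spij].
  have e : (P i j * a - b) ^+ 2 = P i j ^+ 2 * a ^+ 2 - 2 * (P i j * (a * b)) + b ^+ 2 by ring.
  rewrite e in h1.
  lra.
move=> x s; split.
- rewrite /nodeDer; expand3.
  rewrite !(sy o0 o1) !(sy o0 o2) !(sy o1 o2).
  set y := r * (P o0 o2 * x o0 + P o1 o2 * x o1 + P o2 o2 * x o2).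
  set z := r * (P o0 o2 * s o0 + P o1 o2 * s o1 + P o2 o2 * s o2).
  have hy : y ^+ 2 <= c * (x o0 ^+ 2 + x o1 ^+ 2 + x o2 ^+ 2).
    have -> : y = (r * P o0 o2) * x o0 + (r * P o1 o2) * x o1 + (r * P o2 o2) * x o2 by rewrite /y; ring.
    apply: le_trans (cs3 _ _ _ _ _ _) _; apply: ler_wpM2r.
      by have := sqr_ge0 (x o0); have := sqr_ge0 (x o1); have := sqr_ge0 (x o2); lra.
    by rewrite /c !exprMn; lra.
  have hz : z ^+ 2 <= c * (s o0 ^+ 2 + s o1 ^+ 2 + s o2 ^+ 2).
    have -> : z = (r * P o0 o2) * s o0 + (r * P o1 o2) * s o1 + (r * P o2 o2) * s o2 by rewrite /z; ring.
    apply: le_trans (cs3 _ _ _ _ _ _) _; apply: ler_wpM2r.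
      by have := sqr_ge0 (s o0); have := sqr_ge0 (s o1); have := sqr_ge0 (s o2); lra.
    by rewrite /c !exprMn; lra.
  have S0 : 0 <= s o0 ^+ 2 + s o1 ^+ 2 + s o2 ^+ 2.
    by have := sqr_ge0 (s o0); have := sqr_ge0 (s o1); have := sqr_ge0 (s o2); lra.
  have I := node_ineq eps0 r0 al0 (ltW g0) ag c0 erefl S0 hy hz erefl erefl erefl erefl.
  set X := x o0 ^+ 2 + x o1 ^+ 2 + x o2 ^+ 2.
  set u := - (alpha * (g * y - z)).
  match goal with |- is_true (?L <= _) => have E : L - (- eps * X + y ^+ 2 + 2 * u * y + dl * (2 * (x o0 * x o1 + x o1 * x o2) - 2 * r * x o2 ^+ 2 + 2 * (r * x o2) * u)) =
    x o0 ^+ 2 * (eps - tau^-1 ^+ 2 * P o0 o2 ^+ 2) + 2 * (x o0 * x o1 * (P o0 o0 - tau^-1 ^+ 2 * P o0 o2 * P o1 o2))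
    + 2 * (x o0 * x o2 * (P o0 o1 - tau^-1 * P o0 o2 - tau^-1 ^+ 2 * P o0 o2 * P o2 o2))
    + x o1 ^+ 2 * (2 * P o0 o1 - tau^-1 ^+ 2 * P o1 o2 ^+ 2 + eps)
    + 2 * (x o1 * x o2 * (P o1 o1 - tau^-1 * P o1 o2 + P o0 o2 - tau^-1 ^+ 2 * P o1 o2 * P o2 o2))
    + x o2 ^+ 2 * (2 * P o1 o2 - 2 / tau * P o2 o2 - tau^-1 ^+ 2 * P o2 o2 ^+ 2 + eps) end.
    rewrite /u /y /z /X /r. ring.
  rewrite a1 a2 a3 a4 a5 a6 !mulr0 !addr0 in E.
  move: E I; rewrite -/dl -/D /u /y /z /X /r => E I; lra.
- clearbody dl D Sp c r.
  have h := psdP (\col_i x i).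
  have h' : 0 <= (x o0 * P o0 o0 + x o1 * P o1 o0 + x o2 * P o2 o0) * x o0 +
    (x o0 * P o0 o1 + x o1 * P o1 o1 + x o2 * P o2 o1) * x o1 +
    (x o0 * P o0 o2 + x o1 * P o1 o2 + x o2 * P o2 o2) * x o2.
    by move: h; expand3; rewrite !add0r.
  rewrite !sum3 /=; lra.
- clearbody dl D Sp c r.
  rewrite !sum3 /=.
  have e00 := ent (x o0) (x o0) o0 o0. have e01 := ent (x o0) (x o1) o0 o1.
  have e02 := ent (x o0) (x o2) o0 o2. have e10 := ent (x o1) (x o0) o1 o0.
  have e11 := ent (x o1) (x o1) o1 o1. have e12 := ent (x o1) (x o2) o1 o2.
  have e20 := ent (x o2) (x o0) o2 o0. have e21 := ent (x o2) (x o1) o2 o1.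
  have e22 := ent (x o2) (x o2) o2 o2.
  have f0 : 0 <= Sp * x o0 ^+ 2 by apply: mulr_ge0 => //; exact: sqr_ge0.
  have f1 : 0 <= Sp * x o1 ^+ 2 by apply: mulr_ge0 => //; exact: sqr_ge0.
  have f2 : 0 <= Sp * x o2 ^+ 2 by apply: mulr_ge0 => //; exact: sqr_ge0.
  have := sqr_ge0 (x o0); have := sqr_ge0 (x o1); have := sqr_ge0 (x o2).
  have := ltW dl0.
  move=> ? ? ? ?; lra.
Qed.
Lemma dag_rank (N : nat) (a : 'I_N -> 'I_N -> bool) :
  directed_acyclic a ->
  exists rk : 'I_N -> nat, (forall i, (rk i <= N)%N) /\ forall i j, a i j -> (rk j < rk i)%N.
Proof.
move=> dag.
exists (fun i => #|[set k | connect a i k]|); split.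
  by move=> i; apply: leq_trans (max_card _) _; rewrite card_ord.
move=> i j aij; apply: proper_card; apply/properP; split.
  apply/fintype.subsetP => k; rewrite !inE => cjk.
  by apply: connect_trans cjk; apply: connect1.
exists i; rewrite !inE ?connect0 //.
apply/negP => /connectP [p pp lp].
apply: dag; exists i, (j :: p); split => //; split.
  by rewrite /= aij.
by rewrite /= -lp.
Qed.

Definition ix (N : nat) (c : 'I_3) (i : 'I_N) : 'I_(N + (N + N)) :=
  match val c with
  | 0 => lshift (N + N) i
  | 1 => rshift N (lshift N i)
  | _ => rshift N (rshift N i)
  end.

Lemma sum_ix (R : realType) N (f : 'I_(N + (N + N)) -> R) :
  \sum_k f k = \sum_(i < N) \sum_(c < 3) f (ix c i).
Proof.
rewrite big_split_ord big_split_ord /=.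
under [RHS]eq_bigr do rewrite sum3.
by rewrite !big_split /= addrA.
Qed.

Lemma Grow (R : realType) N (a : 'I_N -> 'I_N -> bool) (p : 'I_N -> bool) (v : 'I_N -> R) i :
  \sum_j Gmat R a p i j * v j = (deg R a i + (p i)%:R) * v i - \sum_j (a i j)%:R * v j.
Proof.
rewrite /Gmat; under eq_bigr do rewrite mxE mulrBl; rewrite sumrB; congr (_ - _).
rewrite (bigD1 i) //= eqxx mul1r big1 ?addr0 // => j /negbTE ji.
by rewrite eq_sym ji mul0r mul0r.
Qed.

Lemma delta_sum (R : realType) N (v : 'I_N -> R) i :
  \sum_j (i == j)%:R * v j = v i.
Proof.
rewrite (bigD1 i) //= eqxx mul1r big1 ?addr0 // => j /negbTE ji.
by rewrite eq_sym ji mul0r.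
Qed.

Lemma lin_sum (R : realType) N (i : 'I_N) (K0 K1 K2 d g : R) (A x y z : 'I_N -> R) :
  \sum_j (- (K0 * ((i == j)%:R * g - A j)) * x j + - (K1 * ((i == j)%:R * g - A j)) * y j
     + (d *- (i == j) - K2 * ((i == j)%:R * g - A j)) * z j)
  = - (K0 * (g * x i - \sum_j A j * x j)) - K1 * (g * y i - \sum_j A j * y j) - d * z i
    - K2 * (g * z i - \sum_j A j * z j).
Proof.
have E : forall j, - (K0 * ((i == j)%:R * g - A j)) * x j + - (K1 * ((i == j)%:R * g - A j)) * y j
     + (d *- (i == j) - K2 * ((i == j)%:R * g - A j)) * z j =
   (- (K0 * g)) * ((i == j)%:R * x j) + K0 * (A j * x j) + (- (K1 * g)) * ((i == j)%:R * y j)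
   + K1 * (A j * y j) + (- d - K2 * g) * ((i == j)%:R * z j) + K2 * (A j * z j).
  by move=> j; rewrite -mulr_natr; ring.
under eq_bigr do rewrite E.
rewrite !big_split /= -!mulr_sumr !delta_sum; ring.
Qed.

Lemma row_cl (R : realType) N (tau alpha : 'I_N -> R) (P : 'I_N -> 'M[R]_3)
  (a : 'I_N -> 'I_N -> bool) (p : 'I_N -> bool) (v : 'cV[R]_(N + (N + N))) i c :
  (forall i, 0 < tau i) ->
  (closed_loop tau alpha P (Gmat R a p) *m v) (ix c i) 0 =
  nodeDer (tau i) (alpha i) (deg R a i + (p i)%:R) (P i) (fun c => v (ix c i) 0)
    (fun c => \sum_j (a i j)%:R * v (ix c j) 0) c.
Proof.
move=> tau0.
rewrite mxE sum_ix.
under eq_bigr do rewrite sum3.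
rewrite /closed_loop /nodeDer.
case: c => [[|[|[|c]]] hc] //=.
- rewrite /ix /=.
  under eq_bigr do rewrite !(block_mxEul, block_mxEur, block_mxEdl, block_mxEdr, row_mxEl, row_mxEr, col_mxEu, col_mxEd) !mxE mul0r add0r mul0r addr0.
  by rewrite delta_sum.
- rewrite /ix /=.
  under eq_bigr do rewrite !(block_mxEul, block_mxEur, block_mxEdl, block_mxEdr, row_mxEl, row_mxEr, col_mxEu, col_mxEd) !mxE !mul0r !add0r.
  by rewrite delta_sum.
- rewrite /ix /=.
  under eq_bigr do rewrite !(block_mxEul, block_mxEur, block_mxEdl, block_mxEdr, row_mxEl, row_mxEr, col_mxEu, col_mxEd).
  rewrite /Tmat /Delta !mul_diag_mx.
  under eq_bigr do rewrite !mxE.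
  have gE c : alpha i * (\sum_j (Bi (tau i))^T ord0 j * P i j c) = gain (tau i) (alpha i) (P i) ord0 c.
    by rewrite /gain !mxE.
  rewrite lin_sum !gE [in RHS]sum3 /o0 /o1 /o2 /=; ring.
Qed.

Lemma dM (R : realType) (f g : R -> R) (t df dg : R) :
  is_derive t 1 f df -> is_derive t 1 g dg ->
  is_derive t 1 (fun s => f s * g s) (df * g t + f t * dg).
Proof.
move=> hf hg.
have := is_deriveM hf hg.
have -> : (f * g)%R = (fun s => f s * g s) by apply: funext.
move=> h; apply: is_derive_eq h _.
by change (f t * dg + g t * df = df * g t + f t * dg); ring.
Qed.

Lemma dZ (R : realType) (f : R -> R) (t df k : R) :
  is_derive t 1 f df -> is_derive t 1 (fun s => k * f s) (k * df).
Proof.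
move=> hf; have := is_deriveZ k hf.
by have -> : (k \*: f) = (fun s => k * f s) by apply: funext.
Qed.

Lemma dsum (R : realType) n (h : 'I_n -> R -> R) (t : R) (dh : 'I_n -> R) :
  (forall i, is_derive t 1 (h i) (dh i)) ->
  is_derive t 1 (fun s => \sum_(i < n) h i s) (\sum_(i < n) dh i).
Proof.
move=> H; have := is_derive_sum H.
have -> : (\sum_(i < n) h i) = (fun s => \sum_(i < n) h i s).
  by apply: funext => s; rewrite fct_sumE.
done.
Qed.

Lemma sq_sum_le (R : realType) N (f : 'I_N -> R) :
  (\sum_j f j) ^+ 2 <= N%:R * \sum_j f j ^+ 2.
Proof.
have e1 : (\sum_j f j) ^+ 2 = \sum_j \sum_k f j * f k.
  by rewrite expr2 mulr_suml; apply: eq_bigr => j _; rewrite mulr_sumr.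
have e2 : \sum_j \sum_k (f j ^+ 2 + f k ^+ 2) = 2 * (N%:R * \sum_j f j ^+ 2).
  rewrite (eq_bigr (fun j => N%:R * f j ^+ 2 + \sum_k f k ^+ 2)); last first.
    by move=> j _; rewrite big_split /= sumr_const card_ord mulr_natl.
  by rewrite big_split /= -mulr_sumr sumr_const card_ord mulr_natl; ring.
have h : 2 * \sum_j \sum_k f j * f k <= \sum_j \sum_k (f j ^+ 2 + f k ^+ 2).
  rewrite mulr_sumr; apply: ler_sum => j _; rewrite mulr_sumr; apply: ler_sum => k _.
  have := sqr_ge0 (f j - f k); lra.
rewrite e1; lra.
Qed.

Lemma min_trick (R : realType) N (c : 'I_N -> R) :
  (forall i, 0 < c i) -> 0 < (1 + \sum_i (c i)^-1)^-1 /\ forall i, (1 + \sum_i (c i)^-1)^-1 <= c i.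
Proof.
move=> c0.
have S0 : 0 <= \sum_i (c i)^-1 by apply: sumr_ge0 => i _; rewrite invr_ge0; exact: ltW.
have T0 : 0 < 1 + \sum_i (c i)^-1 by lra.
split; first by rewrite invr_gt0.
move=> i; rewrite -div1r ler_pdivrMr //.
have : (c i)^-1 <= \sum_i (c i)^-1.
  rewrite (bigD1 i) //= lerDl; apply: sumr_ge0 => j _; rewrite invr_ge0; exact: ltW.
move=> h.
have ci : c i * (c i)^-1 = 1 by rewrite divff // gt_eqF.
have : c i * (c i)^-1 <= c i * (1 + \sum_i (c i)^-1) by rewrite ler_pM2l //; lra.
by rewrite ci.
Qed.

Unset Implicit Arguments.

Theorem theorem3 (R : realType) (N : nat)
    (a : 'I_N -> 'I_N -> bool) (p : 'I_N -> bool)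
    (tau eps alpha : 'I_N -> R) (P : 'I_N -> 'M[R]_3) :
  (forall i, 0 < tau i) ->
  (forall i, a i i = false) ->
  directed_acyclic a ->
  (forall i, 0 < deg R a i + (p i)%:R) ->
  (forall i, 0 < eps i) ->
  (forall i, psd (P i)) ->
  (forall i, ARE_root (Ai (tau i)) (Bi (tau i)) (eps i) (P i)) ->
  (forall i, (2 * (deg R a i + (p i)%:R))^-1 <= alpha i) ->
  asymptotically_stable (closed_loop tau alpha P (Gmat R a p)).
Proof.
move=> htau haii hdag hg heps hpsd hare halpha.
set M := closed_loop tau alpha P (Gmat R a p).
set g := fun i => deg R a i + (p i)%:R.
have Hnode i := node (htau i) (heps i) (hg i) (halpha i) (hpsd i) (hare i).
have [dl Hdl] := boolp.choice Hnode.
have [D HD] := boolp.choice Hdl.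
have [L HL] := boolp.choice HD.
have dl0 i : 0 < dl i by case: (HL i).
have D0 i : 0 <= D i by case: (HL i).
have L0 i : 0 < L i by case: (HL i).
have Hder i x s := (let: And4 _ _ _ h := HL i in h) x s.
have [rk [rkN rkE]] := dag_rank hdag.
set Dsum := \sum_i D i.
have Dsum0 : 0 <= Dsum by apply: sumr_ge0.
set K := 2 + \sum_j (4 * N%:R * Dsum / eps j).
have Ksum0 : 0 <= \sum_j (4 * N%:R * Dsum / eps j).
  apply: sumr_ge0 => j _; apply: divr_ge0; last exact: ltW.
  by apply: mulr_ge0 => //; apply: mulr_ge0.
have K1 : 1 <= K by rewrite /K; lra.
have K0 : 0 < K by lra.
set w := fun i => K ^+ (N - rk i).
have w0 i : 0 < w i by apply: exprn_gt0.
have wK i j : a i j -> K * w i <= w j.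
  move=> aij; rewrite /w -exprS; apply: ler_weXn2l => //.
  have := rkE _ _ aij; have := rkN i; lia.
have KD j : N%:R * Dsum / K <= eps j / 4.
  have hj : 4 * N%:R * Dsum / eps j <= \sum_j (4 * N%:R * Dsum / eps j).
    rewrite (bigD1 j) //= lerDl; apply: sumr_ge0 => k _; apply: divr_ge0; last exact: ltW.
    by apply: mulr_ge0 => //; apply: mulr_ge0.
  have hK : 4 * N%:R * Dsum / eps j <= K by rewrite /K; lra.
  rewrite ler_pdivrMr // -ler_pdivrMl; last by apply: divr_gt0 => //; exact: heps.
  apply: le_trans hK; rewrite le_eqVlt; apply/orP; left; apply/eqP.
  field; have := heps j; lra.
set Xf := fun (v : 'cV[R]_(N + (N + N))) i => \sum_(c < 3) v (ix c i) 0 ^+ 2.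
have Xf0 v i : 0 <= Xf v i by apply: sumr_ge0 => c _; exact: sqr_ge0.
have sqnX v : sqn v = \sum_i Xf v i by rewrite /sqn sum_ix.
set qf := fun (v : 'cV[R]_(N + (N + N))) i => \sum_(r < 3) \sum_(c < 3)
   (P i r c + dl i * (r == c)%:R) * (v (ix r i) 0 * v (ix c i) 0).
set Wf := fun v => \sum_i w i * qf v i.
have [d00 d0le] := min_trick (fun i => mulr_gt0 (w0 i) (dl0 i)).
set d0 := (1 + \sum_i (w i * dl i)^-1)^-1 in d00 d0le.
have ce0 i : 0 < w i * eps i / 4 by apply: divr_gt0 => //; apply: mulr_gt0.
have [m00 m0le] := min_trick ce0.
set m0 := (1 + \sum_i (w i * eps i / 4)^-1)^-1 in m00 m0le.
set Lt := 1 + \sum_i w i * L i.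
have wL0 i : 0 <= w i * L i by apply: mulr_ge0; apply: ltW.
have Lt0 : 0 < Lt.
  have h : 0 <= \sum_i w i * L i by apply: sumr_ge0 => i _.
  rewrite /Lt; lra.
have Ltle i : w i * L i <= Lt.
  rewrite /Lt (bigD1 i) //=; have h : 0 <= \sum_(j | j != i) w j * L j by apply: sumr_ge0.
  lra.
apply: (@GL R _ M Wf d0 Lt m0) => //.
- move=> v; rewrite sqnX mulr_sumr; apply: ler_sum => i _.
  have [_ hlo _] := Hder i (fun c => v (ix c i) 0) (fun c => v (ix c i) 0).
  apply: (@le_trans _ _ (w i * dl i * Xf v i)).
    by apply: ler_wpM2r => //.
  by rewrite -mulrA; apply: ler_wpM2l; [exact: ltW | exact: hlo].
- move=> v; rewrite sqnX mulr_sumr; apply: ler_sum => i _.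
  have [_ _ hhi] := Hder i (fun c => v (ix c i) 0) (fun c => v (ix c i) 0).
  apply: (@le_trans _ _ (w i * L i * Xf v i)); last by apply: ler_wpM2r => //.
  by rewrite -mulrA; apply: ler_wpM2l; [exact: ltW | exact: hhi].
move=> x xs.
set xd := fun t k => \sum_(j < N + (N + N)) M k j * x t j 0.
exists (fun t => \sum_i w i * \sum_(r < 3) \sum_(c < 3) (P i r c + dl i * (r == c)%:R) *
   (xd t (ix r i) * x t (ix c i) 0 + x t (ix r i) 0 * xd t (ix c i))).
split.
  move=> t; rewrite /Wf /qf.
  apply: dsum => i; apply: dZ; apply: dsum => r; apply: dsum => c; apply: dZ; apply: dM; exact: xs.
move=> t.
set Si := fun i => \sum_(c < 3) (\sum_j (a i j)%:R * x t (ix c j) 0) ^+ 2.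
have step1 i : \sum_(r < 3) \sum_(c < 3) (P i r c + dl i * (r == c)%:R) *
   (xd t (ix r i) * x t (ix c i) 0 + x t (ix r i) 0 * xd t (ix c i))
   <= - (eps i / 2) * Xf (x t) i + D i * Si i.
  have xdE r : xd t (ix r i) = nodeDer (tau i) (alpha i) (deg R a i + (p i)%:R) (P i)
      (fun c => x t (ix c i) 0) (fun c => \sum_j (a i j)%:R * x t (ix c j) 0) r.
    by rewrite -(row_cl alpha P a p (x t) i r htau) mxE.
  under eq_bigr do under eq_bigr do rewrite !xdE.
  by have [h _ _] := Hder i (fun c => x t (ix c i) 0) (fun c => \sum_j (a i j)%:R * x t (ix c j) 0).
have SiB i : Si i <= N%:R * \sum_j (a i j)%:R * Xf (x t) j.
  apply: (@le_trans _ _ (\sum_(c < 3) N%:R * \sum_j (a i j)%:R * x t (ix c j) 0 ^+ 2)).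
    apply: ler_sum => c _; apply: le_trans (sq_sum_le _) _.
    apply: ler_wpM2l => //; apply: ler_sum => j _.
    by case: (a i j); rewrite ?mul1r ?mul0r ?expr0n //= exprMn expr1n mul1r.
  rewrite -mulr_sumr; apply: ler_wpM2l => //.
  rewrite exchange_big /=; apply: ler_sum => j _.
  by rewrite /Xf mulr_sumr.
apply: (@le_trans _ _ (\sum_i w i * (- (eps i / 2) * Xf (x t) i + D i * (N%:R * \sum_j (a i j)%:R * Xf (x t) j)))).
  apply: ler_sum => i _; apply: ler_wpM2l; first exact: ltW.
  apply: le_trans (step1 i) _; apply: lerD => //; apply: ler_wpM2l; [exact: D0 | exact: SiB].
under eq_bigr do rewrite mulrDr.
rewrite big_split /=.
have cross : \sum_i w i * (D i * (N%:R * \sum_j (a i j)%:R * Xf (x t) j))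
    <= \sum_j (w j * eps j / 4) * Xf (x t) j.
  have e : \sum_i w i * (D i * (N%:R * \sum_j (a i j)%:R * Xf (x t) j)) =
      \sum_j (\sum_i (a i j)%:R * w i * (D i * N%:R)) * Xf (x t) j.
    under eq_bigr do rewrite !mulr_sumr.
    rewrite exchange_big /=; apply: eq_bigr => j _; rewrite mulr_suml.
    by apply: eq_bigr => i _; ring.
  rewrite e; apply: ler_sum => j _; apply: ler_wpM2r => //.
  apply: (@le_trans _ _ (\sum_i w j / K * (D i * N%:R))).
    apply: ler_sum => i _; apply: ler_wpM2r; first by apply: mulr_ge0.
    case aij: (a i j); rewrite ?mul1r ?mul0r.
      by rewrite ler_pdivlMr // mulrC; exact: wK.
    by apply: divr_ge0; [exact: ltW | exact: ltW].
  rewrite -mulr_sumr -mulr_suml.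
  have : w j / K * (Dsum * N%:R) = w j * (N%:R * Dsum / K) by rewrite /Dsum; field; lra.
  move=> ->; rewrite -[w j * eps j / 4]mulrA; apply: ler_wpM2l; first exact: ltW.
  by have := KD j; lra.
have fin : \sum_i w i * (- (eps i / 2) * Xf (x t) i) + \sum_j (w j * eps j / 4) * Xf (x t) j
    = - \sum_i (w i * eps i / 4) * Xf (x t) i.
  rewrite -sumrN -big_split /=; apply: eq_bigr => i _.
  have fe : forall A B C : R, A * (- (B / 2) * C) + A * B / 4 * C = - (A * B / 4 * C) by move=> A B C; field.
  exact: fe.
apply: le_trans (lerD (lexx _) cross) _.
rewrite fin sqnX lerN2 mulr_sumr; apply: ler_sum => i _.
by apply: ler_wpM2r => //.
Qed.
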